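(* For any two $n$-qubit density matrices $\rho,\sigma$, $|\mathcal{C}(\rho)-\mathcal{C}(\sigma)|\le\|\rho-\sigma\|_1$.
   Context: For an $n$-qubit density matrix $\rho$, $\mathcal{C}(\rho)=1-\mathrm{Tr}[(\bigotimes_{i=1}^n\Pi_+^{(i)})\rho^{\otimes 2}]$, where $\Pi_+^{(i)}=\frac12(\mathbb{1}+\mathbb{F}^{(i)})$ and $\mathbb{F}^{(i)}$ swaps the $i$-th qubits of the two copies. $\|\cdot\|_1$ is the trace norm. *)

(* Defs.v *)
From HB Require Import structures.
From mathcomp Require Import all_boot all_order all_algebra.
From mathcomp Require Import sesquilinear spectral.
Set Implicit Arguments. Unset Strict Implicit. Unset Printing Implicit Defensive.
Import Order.TTheory GRing.Theory Num.Theory.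
Local Open Scope ring_scope.
Local Open Scope sesquilinear_scope.

Section Qubits.
Variable C : numClosedFieldType.

Definition psdmx (N : nat) (A : 'M[C]_N) : Prop :=
  forall v : 'rV[C]_N, 0 <= (v *m A *m v ^t*) 0 0.

Definition density_matrix (n : nat) (rho : 'M[C]_(2 ^ n)) : Prop :=
  [/\ rho \is hermsymmx, psdmx rho & \tr rho = 1].

Definition pair_of (N : nat) (k : 'I_(N * N)) : 'I_N * 'I_N :=
  enum_val (cast_ord (esym (@mxvec_cast N N)) k).

Definition tens (N : nat) (A B : 'M[C]_N) : 'M[C]_(N * N) :=
  \matrix_(a, b) (A (pair_of a).1 (pair_of b).1 * B (pair_of a).2 (pair_of b).2).

Definition qbit (n : nat) (x : 'I_(2 ^ n)) (i : 'I_n) : bool := odd (x %/ 2 ^ i).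

(* F^(i): swaps the i-th qubits of the two copies *)
Definition swapq (n : nat) (i : 'I_n) : 'M[C]_(2 ^ n * 2 ^ n) :=
  \matrix_(a, b)
    (let: (x, y) := pair_of a in let: (x', y') := pair_of b in
     [&& [forall j : 'I_n, (j != i) ==>
            ((qbit x j == qbit x' j) && (qbit y j == qbit y' j))],
         qbit x i == qbit y' i & qbit y i == qbit x' i]%:R).

Definition Pplus (n : nat) (i : 'I_n) : 'M[C]_(2 ^ n * 2 ^ n) :=
  2^-1 *: (1%:M + swapq i).

(* tensor product over i of the Pi_+^(i) (each acting on its own qubit pair),
   i.e. the product of the commuting operators Pi_+^(i) *)
Definition Pplus_all (n : nat) : 'M[C]_(2 ^ n * 2 ^ n) :=
  \big[mulmx/1%:M]_(i < n) Pplus i.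

Definition Cmeas (n : nat) (rho : 'M[C]_(2 ^ n)) : C :=
  1 - \tr (Pplus_all n *m tens rho rho).

(* trace norm ||A||_1 = Tr sqrt(A^dagger A) = sum of square roots of the
   eigenvalues of the (normal, PSD) matrix A^dagger A *)
Definition trnorm (N : nat) (A : 'M[C]_N) : C :=
  \sum_(i < N) sqrtC (spectral_diag (A ^t* *m A) 0 i).

End Qubits.

(* Main.v *)
Require Import Defs.
From HB Require Import structures.
From mathcomp Require Import all_boot all_order all_algebra.
From mathcomp Require Import sesquilinear spectral.
From mathcomp Require Import zify ring.
Set Implicit Arguments. Unset Strict Implicit. Unset Printing Implicit Defensive.
Import Order.TTheory GRing.Theory Num.Theory.

Definition nbit (x j : nat) : bool := odd (x %/ 2 ^ j).
Definition fromb (n : nat) (b : nat -> bool) : nat := \sum_(j < n) (b j : nat) * 2 ^ j.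

Lemma fromb_S n b : fromb n.+1 b = b 0 + 2 * fromb n (fun j => b j.+1).
Proof.
rewrite /fromb big_ord_recl /= expn0 muln1 big_distrr /=; congr addn.
by apply: eq_bigr => j _; rewrite expnS mulnCA.
Qed.

Lemma eq_fromb n b b' : (forall j, j < n -> b j = b' j) -> fromb n b = fromb n b'.
Proof. by move=> H; apply: eq_bigr => j _; rewrite H. Qed.

Lemma fromb_lt n b : fromb n b < 2 ^ n.
Proof.
elim: n b => [|n IH] b; first by rewrite /fromb big_ord0.
rewrite fromb_S expnS; have := IH (fun j => b j.+1).
case: (b 0) => /=; lia.
Qed.

Lemma nbit_fromb n b i : i < n -> nbit (fromb n b) i = b i.
Proof.
elim: n b i => [|n IH] b i //; rewrite fromb_S.
case: i => [|i] Hi.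
  rewrite /nbit expn0 divn1 oddD oddM /=; by case: (b 0).
rewrite /nbit expnS divnMA.
have -> : (b 0 + 2 * fromb n (fun j => b j.+1)) %/ 2 = fromb n (fun j => b j.+1).
  case: (b 0) => /=; lia.
exact: IH.
Qed.

Lemma fromb_nbit n x : x < 2 ^ n -> fromb n (nbit x) = x.
Proof.
elim: n x => [|n IH] x Hx.
  by rewrite /fromb big_ord0; move: Hx; rewrite expn0; lia.
rewrite fromb_S (@eq_fromb n _ (nbit (x %/ 2))); last first.
  by move=> j _; rewrite /nbit expnS divnMA.
rewrite IH; last by rewrite ltn_divLR // mulnC -expnS.
rewrite /nbit expn0 divn1 {3}(divn_eq x 2) modn2; case: (odd x) => /=; lia.
Qed.

Lemma nbit_inj n x y : x < 2 ^ n -> y < 2 ^ n ->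
  (forall j, j < n -> nbit x j = nbit y j) -> x = y.
Proof.
move=> Hx Hy H; rewrite -(fromb_nbit Hx) -(fromb_nbit Hy); exact: eq_fromb.
Qed.

Section Perm.
Variable n : nat.
Local Notation N := (2 ^ n).

Definition mkq (b : nat -> bool) : 'I_N := Ordinal (fromb_lt n b).

Lemma nbit_mkq b j : j < n -> nbit (mkq b) j = b j.
Proof. exact: nbit_fromb. Qed.

Lemma ordq_inj (x y : 'I_N) : (forall j, j < n -> nbit x j = nbit y j) -> x = y.
Proof. by move=> H; apply: val_inj; apply: (nbit_inj (ltn_ord x) (ltn_ord y)). Qed.

Definition swp (i : nat) (p : 'I_N * 'I_N) : 'I_N * 'I_N :=
  (mkq (fun j => if j == i then nbit p.2 j else nbit p.1 j),
   mkq (fun j => if j == i then nbit p.1 j else nbit p.2 j)).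

Lemma swpK i p : swp i (swp i p) = p.
Proof.
case: p => x y; rewrite /swp /=; congr pair; apply: ordq_inj => j jn;
  rewrite !nbit_mkq //; by case: eqP.
Qed.

Lemma swpC i k p : swp i (swp k p) = swp k (swp i p).
Proof.
case: p => x y; rewrite /swp /=; congr pair; apply: ordq_inj => j jn;
  rewrite !nbit_mkq //; by case: eqP; case: eqP.
Qed.

Definition idx_of (p : 'I_N * 'I_N) : 'I_(N * N) :=
  cast_ord (@mxvec_cast N N) (enum_rank p).

Lemma pair_idx p : pair_of (idx_of p) = p.
Proof. by rewrite /pair_of /idx_of cast_ordK enum_rankK. Qed.

Lemma idx_pair a : idx_of (pair_of a) = a.
Proof. by rewrite /pair_of /idx_of enum_valK cast_ordKV. Qed.

Definition sig (i : nat) (a : 'I_(N * N)) : 'I_(N * N) := idx_of (swp i (pair_of a)).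

Lemma sigK i a : sig i (sig i a) = a.
Proof. by rewrite /sig pair_idx swpK idx_pair. Qed.

Lemma sigC i k a : sig i (sig k a) = sig k (sig i a).
Proof. by rewrite /sig !pair_idx swpC. Qed.

Lemma swapq_bool (i : 'I_n) (x y x' y' : 'I_N) :
  [&& [forall j : 'I_n, (j != i) ==>
            ((qbit x j == qbit x' j) && (qbit y j == qbit y' j))],
         qbit x i == qbit y' i & qbit y i == qbit x' i]
  = ((x', y') == swp i (x, y)).
Proof.
apply/idP/idP.
  case/and3P => /forallP H /eqP H1 /eqP H2; apply/eqP.
  rewrite /swp /=; congr pair; apply: ordq_inj => j jn; rewrite nbit_mkq //;
  (case: eqP => [->|ne]; [by rewrite /qbit in H1 H2 *|]);
  have := H (Ordinal jn); rewrite /qbit /=;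
  (have -> : (Ordinal jn != i) by apply/eqP => E; apply: ne; rewrite -E);
  case/andP => /eqP E1 /eqP E2; rewrite /nbit; by [rewrite E1 | rewrite E2].
move/eqP => [-> ->]; apply/and3P; split.
- apply/forallP => j; apply/implyP => ne.
  have ne2 : (nat_of_ord j == nat_of_ord i) = false by apply/negbTE.
  rewrite /qbit -!/(nbit _ _) !nbit_mkq //= ne2 !eqxx //.
- by rewrite /qbit -!/(nbit _ _) !nbit_mkq //= eqxx.
- by rewrite /qbit -!/(nbit _ _) !nbit_mkq //= eqxx.
Qed.

End Perm.

Local Open Scope ring_scope.
Local Open Scope sesquilinear_scope.

Section Mats.
Variable C : numClosedFieldType.

Definition pmx m (f : 'I_m -> 'I_m) : 'M[C]_m := \matrix_(a, b) (f a == b)%:R.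

Lemma pmx_mul m (f : 'I_m -> 'I_m) (A : 'M[C]_m) :
  pmx f *m A = \matrix_(a, b) A (f a) b.
Proof.
apply/matrixP => a b; rewrite !mxE (bigD1 (f a)) //= !mxE eqxx mul1r big1 ?addr0 //.
by move=> c /negbTE; rewrite !mxE eq_sym => ->; rewrite mul0r.
Qed.

Lemma pmxM m (f g : 'I_m -> 'I_m) : pmx f *m pmx g = pmx (fun a => g (f a)).
Proof. by rewrite pmx_mul; apply/matrixP => a b; rewrite !mxE. Qed.

Lemma pmx_id m (f : 'I_m -> 'I_m) : (forall a, f a = a) -> pmx f = 1%:M.
Proof. by move=> H; apply/matrixP => a b; rewrite !mxE H. Qed.

Lemma pmx_herm m (f : 'I_m -> 'I_m) : (forall a, f (f a) = a) -> (pmx f)^t* = pmx f.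
Proof.
move=> H; apply/matrixP => a b; rewrite !mxE.
have inj : injective f by apply: (can_inj H).
rewrite -(inj_eq inj) H eq_sym.
by case: (f a == b); rewrite /= ?rmorph0 ?rmorph1.
Qed.

Lemma swapqE n (i : 'I_n) : swapq C i = pmx (sig i).
Proof.
apply/matrixP => a b; rewrite !mxE.
have -> : (sig i a == b) = (pair_of b == swp i (pair_of a)).
  by rewrite /sig -{1}(idx_pair b) (can_eq (@pair_idx n)) eq_sym.
by move: (pair_of a) (pair_of b) => [x y] [x' y']; rewrite swapq_bool.
Qed.

Definition hpro N (H : 'M[C]_N) := H^t* = H /\ H *m H = H.

Lemma half_herm N (F : 'M[C]_N) : F^t* = F -> F *m F = 1%:M ->
  hpro (2^-1 *: (1%:M + F)).
Proof.
move=> Fh FF; split.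
  rewrite linearZ /= map_mxZ linearD /= map_mxD Fh trmx1 map_mx1.
  by rewrite fmorphV rmorph_nat.
rewrite -scalemxAl -scalemxAr mulmxDl !mulmxDr mul1mx mulmx1 FF scalerA.
rewrite !mul1mx (addrC F 1%:M) -mulr2n -scaler_nat scalerA; congr (_ *: _).
by rewrite -mulrA mulVf ?mulr1 // pnatr_eq0.
Qed.

Lemma half_comm N (F G : 'M[C]_N) : F *m G = G *m F ->
  (2^-1 *: (1%:M + F)) *m (2^-1 *: (1%:M + G)) =
  (2^-1 *: (1%:M + G)) *m (2^-1 *: (1%:M + F)).
Proof.
move=> FG; rewrite -!scalemxAl -!scalemxAr; congr (_ *: (_ *: _)).
rewrite !mulmxDl !mulmxDr !mul1mx !mulmx1 FG.
by rewrite -!addrA (addrCA G F).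
Qed.

Lemma Pplus_hpro n (i : 'I_n) : hpro (Pplus C i).
Proof.
rewrite /Pplus swapqE; apply: half_herm.
  by apply: pmx_herm => a; apply: sigK.
by rewrite pmxM; apply: pmx_id => a; apply: sigK.
Qed.

Lemma Pplus_comm n (i k : 'I_n) : Pplus C i *m Pplus C k = Pplus C k *m Pplus C i.
Proof.
rewrite /Pplus !swapqE; apply: half_comm.
by rewrite !pmxM; apply/matrixP => a b; rewrite !mxE sigC.
Qed.

Lemma Pplus_all_hpro n : hpro (Pplus_all C n).
Proof.
rewrite /Pplus_all.
have : forall (r : seq 'I_n), 
  (forall k, \big[mulmx/1%:M]_(i <- r) Pplus C i *m Pplus C k =
             Pplus C k *m \big[mulmx/1%:M]_(i <- r) Pplus C i) /\
  hpro (\big[mulmx/1%:M]_(i <- r) Pplus C i).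
  elim => [|i r [IHc [IHh IHp]]].
    rewrite big_nil; split; first by move=> k; rewrite mul1mx mulmx1.
    by split; rewrite ?trmx1 ?map_mx1 ?mulmx1.
  rewrite big_cons; have [Hh Hp] := Pplus_hpro i; split.
    by move=> k; rewrite -mulmxA IHc !mulmxA Pplus_comm.
  split.
    by rewrite trmx_mul map_mxM IHh Hh IHc.
  set Q := \big[mulmx/1%:M]_(j <- r) _ in IHc IHh IHp *.
  by rewrite -mulmxA (mulmxA Q) IHc -mulmxA IHp mulmxA Hp.
by move=> /(_ (index_enum _)) [].
Qed.

End Mats.

Section LA.
Variable C : numClosedFieldType.

Lemma trCmul m n p (A : 'M[C]_(m, n)) (B : 'M[C]_(n, p)) : (A *m B)^t* = B^t* *m A^t*.
Proof. by rewrite trmx_mul map_mxM. Qed.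

Lemma trCB m n (A B : 'M[C]_(m, n)) : (A - B)^t* = A^t* - B^t*.
Proof. by apply/matrixP => i j; rewrite !mxE rmorphB. Qed.

Lemma trCD m n (A B : 'M[C]_(m, n)) : (A + B)^t* = A^t* + B^t*.
Proof. by apply/matrixP => i j; rewrite !mxE rmorphD. Qed.

Lemma trC1 m : (1%:M : 'M[C]_m)^t* = 1%:M.
Proof. by apply/matrixP => i j; rewrite !mxE rmorph_nat eq_sym. Qed.

Lemma hpro_compl N (H : 'M[C]_N) : hpro H -> hpro (1%:M - H).
Proof.
move=> [Hh Hp]; rewrite /hpro; split; first by rewrite trCB trC1 Hh.
by rewrite mulmxBl !mulmxBr !mul1mx mulmx1 Hp subrr subr0.
Qed.

Lemma dot_ge0 N (z : 'rV[C]_N) : 0 <= (z *m z^t*) 0 0.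
Proof.
rewrite !mxE sumr_ge0 // => i _; rewrite !mxE; exact: mul_conjC_ge0.
Qed.

Lemma hpro_ge0 N (H : 'M[C]_N) (z : 'rV[C]_N) : hpro H -> 0 <= (z *m H *m z^t*) 0 0.
Proof.
case=> Hh Hp.
have -> : z *m H *m z^t* = (z *m H) *m (z *m H)^t*.
  by rewrite trCmul Hh mulmxA -(mulmxA z H H) Hp.
exact: dot_ge0.
Qed.

Lemma row_form N m (U : 'M[C]_(m, N)) (A : 'M[C]_N) k l :
  ((row k U) *m A *m (row l U)^t*) 0 0 = (U *m A *m U^t*) k l.
Proof.
rewrite !mxE; apply: eq_bigr => j _; rewrite !mxE; congr (_ * _).
by apply: eq_bigr => i _; rewrite !mxE.
Qed.

Lemma spec_sum N (A : 'M[C]_N) : A \is normalmx ->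
  A = \sum_k (spectral_diag A 0 k) *: ((row k (spectralmx A))^t* *m row k (spectralmx A)).
Proof.
move/orthomx_spectralP => E; rewrite {1}E invmx_unitary ?spectral_unitarymx //.
apply/matrixP => a b; rewrite mul_mx_diag !mxE summxE; apply: eq_bigr => k _.
rewrite !mxE big_ord1 !mxE; ring.
Qed.

Lemma spec_diag N (A : 'M[C]_N) k : A \is normalmx ->
  spectral_diag A 0 k = ((row k (spectralmx A)) *m A *m (row k (spectralmx A))^t*) 0 0.
Proof.
have /unitarymxP U1 := spectral_unitarymx A.
move/orthomx_spectralP; rewrite row_form invmx_unitary ?spectral_unitarymx //.
set U := spectralmx A; set d := spectral_diag A => E; rewrite E.
rewrite !mulmxA U1 mul1mx -mulmxA U1 mulmx1 !mxE eqxx mulr1n //.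
Qed.

Lemma spec_tr N (A : 'M[C]_N) : A \is normalmx ->
  \tr A = \sum_k spectral_diag A 0 k.
Proof.
have /unitarymxP U1 := spectral_unitarymx A.
move/orthomx_spectralP; rewrite invmx_unitary ?spectral_unitarymx //.
set U := spectralmx A; set d := spectral_diag A => E; rewrite E.
by rewrite mxtrace_mulC mulmxA U1 mul1mx mxtrace_diag.
Qed.

Lemma spec_unit N (A : 'M[C]_N) k :
  ((row k (spectralmx A)) *m (row k (spectralmx A))^t*) 0 0 = 1.
Proof.
have /unitarymxP U1 := spectral_unitarymx A.
have := row_form (spectralmx A) 1%:M k k; rewrite !mulmx1 U1 => ->; by rewrite !mxE eqxx.
Qed.

End LA.

Section Core.
Variable C : numClosedFieldType.
Variable n : nat.
Local Notation N := (2 ^ n)%N.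
Local Notation P := (Pplus_all C n).

Definition g (X Y : 'M[C]_N) := \tr (P *m tens X Y).

Definition kr (w u : 'rV[C]_N) : 'rV[C]_(N * N) :=
  \row_a (w 0 (pair_of a).1 * u 0 (pair_of a).2).

Lemma tens_rank1 w u : tens (w^t* *m w) (u^t* *m u) = (kr w u)^t* *m kr w u.
Proof. by apply/matrixP => a b; rewrite !mxE !big_ord1 !mxE rmorphM; ring. Qed.

Lemma g_rank1 w u : g (w^t* *m w) (u^t* *m u) = (kr w u *m P *m (kr w u)^t*) 0 0.
Proof. by rewrite /g tens_rank1 mulmxA mxtrace_mulC mulmxA trace_mx11. Qed.

Lemma kr_norm w u :
  (kr w u *m (kr w u)^t*) 0 0 = (w *m w^t*) 0 0 * (u *m u^t*) 0 0.
Proof.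
rewrite !mxE big_distrlr /= pair_big /=.
rewrite (reindex (@idx_of n)) /=; last first.
  by exists (@pair_of N) => x _; [apply: pair_idx | apply: idx_pair].
apply: eq_bigr => -[i j] _; rewrite !mxE pair_idx /= rmorphM; ring.
Qed.

Lemma h_bounds (w u : 'rV[C]_N) : (w *m w^t*) 0 0 = 1 -> (u *m u^t*) 0 0 = 1 ->
  0 <= g (w^t* *m w) (u^t* *m u) <= 1.
Proof.
move=> w1 u1; rewrite g_rank1; apply/andP; split.
  by apply: hpro_ge0; apply: Pplus_all_hpro.
rewrite -subr_ge0.
have -> : 1 - (kr w u *m P *m (kr w u)^t*) 0 0 =
          (kr w u *m (1%:M - P) *m (kr w u)^t*) 0 0.
  by rewrite mulmxBr mulmx1 mulmxBl [RHS]mxE kr_norm w1 u1 mulr1 !mxE.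
apply: (hpro_ge0 _ (hpro_compl (Pplus_all_hpro C n))).
Qed.

Lemma g_suml I (r : seq I) (F : I -> 'M[C]_N) Y :
  g (\sum_(k <- r) F k) Y = \sum_(k <- r) g (F k) Y.
Proof.
rewrite /g -raddf_sum /= -mulmx_sumr; congr (\tr (P *m _)).
apply/matrixP => a b; rewrite !mxE !summxE mulr_suml; apply: eq_bigr => k _.
by rewrite !mxE.
Qed.

Lemma g_sumr I (r : seq I) (F : I -> 'M[C]_N) X :
  g X (\sum_(k <- r) F k) = \sum_(k <- r) g X (F k).
Proof.
rewrite /g -raddf_sum /= -mulmx_sumr; congr (\tr (P *m _)).
apply/matrixP => a b; rewrite !mxE !summxE mulr_sumr; apply: eq_bigr => k _.
by rewrite !mxE.
Qed.

Lemma g_scalel c X Y : g (c *: X) Y = c * g X Y.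
Proof.
rewrite /g -mxtraceZ scalemxAr; congr (\tr (P *m _)).
by apply/matrixP => a b; rewrite !mxE mulrA.
Qed.

Lemma g_scaler c X Y : g X (c *: Y) = c * g X Y.
Proof.
rewrite /g -mxtraceZ scalemxAr; congr (\tr (P *m _)).
by apply/matrixP => a b; rewrite !mxE; ring.
Qed.

Definition rk1 (W : 'M[C]_N) k := (row k W)^t* *m row k W.

Lemma g_decl X Y (e d : 'rV[C]_N) (W U : 'M[C]_N) :
  X = \sum_k e 0 k *: rk1 W k -> Y = \sum_m d 0 m *: rk1 U m ->
  g X Y = \sum_k e 0 k * \sum_m d 0 m * g (rk1 W k) (rk1 U m).
Proof.
move=> -> ->; rewrite g_suml; apply: eq_bigr => k _.
rewrite g_scalel g_sumr mulr_sumr mulr_sumr; apply: eq_bigr => m _.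
by rewrite g_scaler.
Qed.

Lemma g_decr X Y (e d : 'rV[C]_N) (W U : 'M[C]_N) :
  X = \sum_k e 0 k *: rk1 W k -> Y = \sum_m d 0 m *: rk1 U m ->
  g Y X = \sum_k e 0 k * \sum_m d 0 m * g (rk1 U m) (rk1 W k).
Proof.
move=> -> ->; rewrite g_suml.
rewrite (eq_bigr (fun m => \sum_k d 0 m * (e 0 k * g (rk1 U m) (rk1 W k)))); last first.
  by move=> m _; rewrite g_scalel g_sumr mulr_sumr; apply: eq_bigr => k _; rewrite g_scaler.
rewrite exchange_big /=; apply: eq_bigr => k _; rewrite mulr_sumr; apply: eq_bigr => m _.
ring.
Qed.

End Core.

Section Final.
Variable C : numClosedFieldType.

Lemma half2 : 2^-1 + 2^-1 = 1 :> C.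
Proof. by rewrite [RHS](splitr 1) mul1r. Qed.

Lemma avg N (e c : 'I_N -> C) : \sum_k e k = 0 -> (forall k, 0 <= c k <= 1) ->
  `|\sum_k e k * c k| <= (\sum_k `|e k|) / 2.
Proof.
move=> e0 hc.
have -> : \sum_k e k * c k = \sum_k e k * (c k - 2^-1).
  transitivity (\sum_k e k * c k - (\sum_k e k) * 2^-1); first by rewrite e0 mul0r subr0.
  by rewrite mulr_suml -sumrB; apply: eq_bigr => k _; rewrite mulrBr.
rewrite mulr_suml; apply: le_trans (ler_norm_sum _ _ _) _; apply: ler_sum => k _.
rewrite normrM ler_wpM2l //.
have /andP [c0 c1] := hc k.
have h0 : (0 : C) <= 2^-1 by rewrite invr_ge0 ler0n.
rewrite real_ler_norml; last by rewrite rpredB // ger0_real.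
by rewrite lerBrDr addNr c0 lerBlDr half2 c1.
Qed.

Lemma half_bound N (e d : 'rV[C]_N) (h : 'I_N -> 'I_N -> C) :
  \sum_k e 0 k = 0 -> (forall m, 0 <= d 0 m) -> \sum_m d 0 m = 1 ->
  (forall k m, 0 <= h k m <= 1) ->
  `|\sum_k e 0 k * \sum_m d 0 m * h k m| <= (\sum_k `|e 0 k|) / 2.
Proof.
move=> e0 d0 d1 hb; have := @avg N (fun k => e 0 k) (fun k => \sum_m d 0 m * h k m) e0.
apply=> k; apply/andP; split.
  by apply: sumr_ge0 => m _; case/andP: (hb k m) => h0 _; rewrite mulr_ge0.
rewrite -d1; apply: ler_sum => m _; case/andP: (hb k m) => h0 h1.
by rewrite ler_piMr.
Qed.

Lemma conjU N (W X : 'M[C]_N) : (W^t* *m X *m W)^t* = W^t* *m X^t* *m W.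
Proof. by rewrite !trCmul trmxCK mulmxA. Qed.

Lemma mulU N (W X Y : 'M[C]_N) : W *m W^t* = 1%:M ->
  (W^t* *m X *m W) *m (W^t* *m Y *m W) = W^t* *m (X *m Y) *m W.
Proof. by move=> WW; rewrite -!mulmxA (mulmxA W) WW mul1mx. Qed.

Lemma diagC N (d : 'rV[C]_N) : (diag_mx d)^t* = diag_mx (\row_k (d 0 k)^*).
Proof.
apply/matrixP => i j; rewrite !mxE eq_sym.
by case: eqP => [->|_] /=; rewrite ?mulr1n ?mulr0n ?rmorph0.
Qed.

Lemma hermE N (A : 'M[C]_N) : (A \is hermsymmx) = (A == A^t*).
Proof. by rewrite is_hermitianmxE expr0 scale1r. Qed.

Lemma trnorm_ge N (D : 'M[C]_N) : D \is normalmx ->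
  \sum_k `|spectral_diag D 0 k| <= trnorm D.
Proof.
move=> hD.
have /unitarymxP WW := spectral_unitarymx D.
have := hD; move/orthomx_spectralP; rewrite invmx_unitary ?spectral_unitarymx //.
rewrite /trnorm.
have hDD : D^t* *m D \is normalmx.
  by apply: hermitian_normalmx; rewrite hermE trCmul trmxCK.
have /unitarymxP QQ' := spectral_unitarymx (D^t* *m D).
have QQ := mulmx1C QQ'.
have lam j : spectral_diag (D^t* *m D) 0 j =
  ((row j (spectralmx (D^t* *m D))) *m (D^t* *m D) *m (row j (spectralmx (D^t* *m D)))^t*) 0 0.
  exact: spec_diag.
set W := spectralmx D; set e := spectral_diag D => E.
set Q := spectralmx (D^t* *m D) in QQ QQ' lam *.
set lm := spectral_diag (D^t* *m D) in lam *.
pose Ab := W^t* *m diag_mx (\row_k `|e 0 k|) *m W.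
have trA : \tr Ab = \sum_k `|e 0 k|.
  by rewrite /Ab mxtrace_mulC mulmxA WW mul1mx mxtrace_diag; apply: eq_bigr => k _; rewrite mxE.
have AbAb : Ab *m Ab^t* = D^t* *m D.
  rewrite /Ab conjU mulU // E conjU mulU //; congr (_ *m _ *m _).
  rewrite !diagC; apply/matrixP => i j; rewrite !mul_mx_diag !mxE.
  case: (eqVneq i j) => [->|ne]; last by rewrite /= !mulr0n !mul0r.
  by rewrite /= !mulr1n geC0_conj ?normr_ge0 // -expr2 normCKC.
have trQ : \tr Ab = \sum_j ((row j Q) *m Ab *m (row j Q)^t*) 0 0.
  rewrite -{1}[Ab]mul1mx -QQ -mulmxA mxtrace_mulC mulmxA /mxtrace.
  by apply: eq_bigr => j _; rewrite row_form /Ab !mulmxA.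
rewrite -trA -[\tr Ab]ger0_norm; last by rewrite trA sumr_ge0 // => k _; rewrite normr_ge0.
rewrite trQ; apply: le_trans (ler_norm_sum _ _ _) _; apply: ler_sum => j _.
rewrite -dotmxE.
apply: le_trans (CauchySchwarz_sqrt (@dotmx C N) _ _).1 _.
rewrite /=. rewrite !dotmxE.
by rewrite spec_unit sqrtC1 mulr1 lam trCmul mulmxA -(mulmxA _ Ab) AbAb.
Qed.

End Final.

Local Close Scope sesquilinear_scope.
Unset Implicit Arguments.
Set Strict Implicit.

Theorem mainTheorem18 (C : numClosedFieldType) (n : nat)
    (rho sigma : 'M[C]_(2 ^ n)) :
  density_matrix rho -> density_matrix sigma ->
  `|Cmeas rho - Cmeas sigma| <= trnorm (rho - sigma).
Proof.
move=> [rh rp rt] [sh sp st].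
set Dl := rho - sigma.
have hD : Dl \is hermsymmx.
  move: rh sh; rewrite !hermE => /eqP r1 /eqP s1.
  by rewrite /Dl trCB -r1 -s1.
have nD := hermitian_normalmx hD.
have nr := hermitian_normalmx rh.
have ns := hermitian_normalmx sh.
have ED := spec_sum nD; have Er := spec_sum nr; have Es := spec_sum ns.
have e0 : \sum_k spectral_diag Dl 0 k = 0.
  by rewrite -spec_tr // /Dl raddfB /= rt st subrr.
have dpos (X : 'M[C]_(2 ^ n)) : psdmx X -> X \is normalmx -> forall m, 0 <= spectral_diag X 0 m.
  by move=> pX nX m; rewrite spec_diag //; apply: pX.
have hb (X Y : 'M[C]_(2 ^ n)) k m : 0 <= g (rk1 (spectralmx X) k) (rk1 (spectralmx Y) m) <= 1.
  by apply: h_bounds; apply: spec_unit.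
have B1 : `|g Dl rho| <= (\sum_k `|spectral_diag Dl 0 k|) / 2.
  rewrite (g_decl ED Er); apply: half_bound => //; first exact: dpos.
  by rewrite -spec_tr.
have B2 : `|g sigma Dl| <= (\sum_k `|spectral_diag Dl 0 k|) / 2.
  rewrite (g_decr ED Es); apply: half_bound => //; first exact: dpos.
  by rewrite -spec_tr.
have -> : Cmeas rho - Cmeas sigma = - (g Dl rho + g sigma Dl).
  have gs : g Dl rho + g sigma Dl = g rho rho - g sigma sigma.
    rewrite /g -mxtraceD -raddfB /= -mulmxDr -mulmxBr; congr (\tr (_ *m _)).
    by apply/matrixP => a b; rewrite !mxE; ring.
  rewrite gs; change (1 - g rho rho - (1 - g sigma sigma) = - (g rho rho - g sigma sigma)).
  ring.
rewrite normrN; apply: le_trans (ler_normD _ _) _.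
apply: le_trans (lerD B1 B2) _.
by rewrite -mulrDr half2 mulr1; apply: trnorm_ge.
Qed.
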